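(* Let $(\gamma_n)$ be a sequence of positive reals satisfying conditions (C1)–(C7) below, let $f,g\in\mathcal{L}$, and let \[ \sigma_n^{fg}(t)=\frac{\sum_{k=0}^n K^k[f(t)]\,K^k[\overline{g(t)}]}{\sum_{k=0}^n\frac{1}{\gamma_k}}. \] If for some $t_0\in\mathbb{R}$ the sequence $\sigma_n^{fg}(t_0)$ converges as $n\to\infty$, then $\sigma_n^{fg}(t)$ converges for all $t\in\mathbb{R}$ to a constant function.
   Context: Given positive reals $\gamma_n$, set $\gamma_{-1}=1$, $p_{-1}=0$, $p_0=1$ and $\gamma_n p_{n+1}(\omega)=\omega p_n(\omega)-\gamma_{n-1}p_{n-1}(\omega)$ ($n\ge0$). Let $\Delta_n=\gamma_{n+1}-\gamma_n$, $\Delta^2_n=\Delta_{n+1}-\Delta_n$. Conditions: (C1) $\gamma_n\to\infty$; (C2) $\Delta_n\to0$; (C3) there exist $n_0,m_0$ with $\gamma_{n+m}>\gamma_n$ for all $n\ge n_0$, $m\ge m_0$; (C4) $\sum 1/\gamma_j=\infty$; (C5) some $\kappa>1$ has $\sum\gamma_j^{-\kappa}<\infty$; (C6) $\sum|\Delta_n|/\gamma_n^2<\infty$; (C7) $\sum|\Delta^2_n|/\gamma_n<\infty$. $C^\infty_{\mathbb{R}\to\mathbb{C}}$ is the set of functions $\mathbb{R}\to\mathbb{C}$ with infinitely differentiable real and imaginary parts. $K^n=(-i)^n p_n\!\left(i\frac{d}{dt}\right)$. $\mathcal{L}$ is the set of $f\in C^\infty_{\mathbb{R}\to\mathbb{C}}$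 for which $\gamma_n(|K^n[f(t)]|^2+|K^{n+1}[f(t)]|^2)$ converges uniformly on every compact interval. *)

(* Defs.v *)
From Stdlib Require Import Reals.
From Coquelicot Require Import Coquelicot.
Open Scope R_scope.

(* gamma_{n-1} with the convention gamma_{-1} = 1 *)
Definition gamma_prev (gamma : nat -> R) (n : nat) : R :=
  match n with O => 1 | S m => gamma m end.

(* coefficients of omega * p(omega) given coefficients of p *)
Definition shift_coef (c : nat -> R) (j : nat) : R :=
  match j with O => 0 | S j' => c j' end.

(* pp gamma n = (coefficients of p_{n-1}, coefficients of p_n),
   p_{-1} = 0, p_0 = 1,
   gamma_n p_{n+1} = omega p_n - gamma_{n-1} p_{n-1}. *)
Fixpoint pp (gamma : nat -> R) (n : nat) : (nat -> R) * (nat -> R) :=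
  match n with
  | O => (fun _ => 0, fun j => match j with O => 1 | S _ => 0 end)
  | S n' => let (a, b) := pp gamma n' in
            (b, fun j => (shift_coef b j - gamma_prev gamma n' * a j) / gamma n')
  end.

(* p_coef gamma n j = coefficient of omega^j in p_n (deg p_n = n) *)
Definition p_coef (gamma : nat -> R) (n j : nat) : R := snd (pp gamma n) j.

Fixpoint cpow (z : C) (n : nat) : C :=
  match n with O => RtoC 1 | S m => Cmult z (cpow z m) end.

Fixpoint csum (a : nat -> C) (n : nat) : C :=
  match n with O => a O | S m => Cplus (csum a m) (a (S m)) end.

Definition cderiv_n (j : nat) (f : R -> C) (t : R) : C :=
  (Derive_n (fun s => Re (f s)) j t, Derive_n (fun s => Im (f s)) j t).

Definition smoothRC (f : R -> C) : Prop :=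
  forall (k : nat) (t : R),
    ex_derive_n (fun s => Re (f s)) k t /\ ex_derive_n (fun s => Im (f s)) k t.

(* K^n[f](t) = (-i)^n p_n(i d/dt) f (t) *)
Definition Kop (gamma : nat -> R) (n : nat) (f : R -> C) (t : R) : C :=
  Cmult (cpow (Copp Ci) n)
        (csum (fun j => Cmult (RtoC (p_coef gamma n j))
                              (Cmult (cpow Ci j) (cderiv_n j f t))) n).

Definition unif_conv_compact (u : nat -> R -> R) : Prop :=
  forall a b : R, a <= b ->
    exists L : R -> R, forall eps : R, 0 < eps ->
      exists N : nat, forall n : nat, (N <= n)%nat ->
        forall t : R, a <= t <= b -> Rabs (u n t - L t) < eps.

Definition in_L (gamma : nat -> R) (f : R -> C) : Prop :=
  smoothRC f /\
  unif_conv_compact (fun n t =>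
     gamma n * ((Cmod (Kop gamma n f t)) ^ 2 + (Cmod (Kop gamma (S n) f t)) ^ 2)).

Definition Delta (gamma : nat -> R) (n : nat) : R := gamma (S n) - gamma n.
Definition Delta2 (gamma : nat -> R) (n : nat) : R :=
  Delta gamma (S n) - Delta gamma n.

Definition CondC1 (gamma : nat -> R) : Prop := is_lim_seq gamma p_infty.
Definition CondC2 (gamma : nat -> R) : Prop := is_lim_seq (Delta gamma) 0.
Definition CondC3 (gamma : nat -> R) : Prop :=
  exists n0 m0 : nat, forall n m : nat, (n0 <= n)%nat -> (m0 <= m)%nat ->
    gamma (n + m)%nat > gamma n.
Definition CondC4 (gamma : nat -> R) : Prop :=
  is_lim_seq (fun n => sum_f_R0 (fun j => / gamma j) n) p_infty.
Definition CondC5 (gamma : nat -> R) : Prop :=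
  exists kappa : R, kappa > 1 /\ ex_series (fun j => Rpower (gamma j) (- kappa)).
Definition CondC6 (gamma : nat -> R) : Prop :=
  ex_series (fun n => Rabs (Delta gamma n) / (gamma n) ^ 2).
Definition CondC7 (gamma : nat -> R) : Prop :=
  ex_series (fun n => Rabs (Delta2 gamma n) / gamma n).

Definition sigma_fg (gamma : nat -> R) (f g : R -> C) (n : nat) (t : R) : C :=
  Cdiv (csum (fun k => Cmult (Kop gamma k f t)
                             (Kop gamma k (fun s => Cconj (g s)) t)) n)
       (RtoC (sum_f_R0 (fun k => / gamma k) n)).

(* Main.v *)
Require Import Defs.
From Stdlib Require Import Reals Lra Lia.
From Coquelicot Require Import Coquelicot.
Open Scope R_scope.

Lemma D_plus f g t a b : is_derive f t a -> is_derive g t b -> is_derive (fun s => f s + g s) t (a+b).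
Proof. intros; now apply (is_derive_plus f g). Qed.
Lemma D_minus f g t a b : is_derive f t a -> is_derive g t b -> is_derive (fun s => f s - g s) t (a-b).
Proof. intros; now apply (is_derive_minus f g). Qed.
Lemma D_opp f t a : is_derive f t a -> is_derive (fun s => - f s) t (- a).
Proof. intros; now apply (is_derive_opp f). Qed.
Lemma D_mult f g t a b : is_derive f t a -> is_derive g t b -> is_derive (fun s => f s * g s) t (a * g t + f t * b).
Proof. intros; apply (is_derive_mult f g); auto. intros; apply Rmult_comm. Qed.
Lemma D_const c t : is_derive (fun _ => c) t 0.
Proof. apply (is_derive_const c). Qed.

Lemma D_eq (f : R -> R) (t a b : R) : is_derive f t a -> a = b -> is_derive f t b.
Proof. intros; subst; auto. Qed.

Definition HasDer (F F' : R -> C) := forall t,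
  is_derive (fun s => Re (F s)) t (Re (F' t)) /\ is_derive (fun s => Im (F s)) t (Im (F' t)).

Lemma HasDer_ext F F' G G' : HasDer F F' -> (forall t, F t = G t) -> (forall t, F' t = G' t) -> HasDer G G'.
Proof.
  intros H e e' t; destruct (H t) as [H1 H2]; rewrite <- e'; split.
  - apply (is_derive_ext (fun s => Re (F s))); [intro; now rewrite e|assumption].
  - apply (is_derive_ext (fun s => Im (F s))); [intro; now rewrite e|assumption].
Qed.

Lemma HasDer_plus F F' G G' : HasDer F F' -> HasDer G G' ->
  HasDer (fun t => Cplus (F t) (G t)) (fun t => Cplus (F' t) (G' t)).
Proof.
  intros H1 H2 t; destruct (H1 t) as [a b]; destruct (H2 t) as [c d]; split; simpl.
  - now apply (D_plus (fun s => Re (F s)) (fun s => Re (G s))).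
  - now apply (D_plus (fun s => Im (F s)) (fun s => Im (G s))).
Qed.

Lemma HasDer_mult F F' G G' : HasDer F F' -> HasDer G G' ->
  HasDer (fun t => Cmult (F t) (G t)) (fun t => Cplus (Cmult (F' t) (G t)) (Cmult (F t) (G' t))).
Proof.
  intros H1 H2 t; destruct (H1 t) as [a b]; destruct (H2 t) as [c d]; split; simpl.
  - eapply D_eq. apply (D_minus (fun s => Re (F s) * Re (G s)) (fun s => Im (F s) * Im (G s))); apply D_mult; eauto.
    unfold Re, Im; ring.
  - eapply D_eq. apply (D_plus (fun s => Re (F s) * Im (G s)) (fun s => Im (F s) * Re (G s))); apply D_mult; eauto.
    unfold Re, Im; ring.
Qed.

Lemma HasDer_const c : HasDer (fun _ => c) (fun _ => RtoC 0).
Proof. intro t; split; simpl; apply D_const. Qed.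

Lemma HasDer_scal c F F' : HasDer F F' -> HasDer (fun t => Cmult c (F t)) (fun t => Cmult c (F' t)).
Proof.
  intro H. eapply HasDer_ext. apply (HasDer_mult _ _ _ _ (HasDer_const c) H).
  intro; reflexivity. intro; simpl. apply injective_projections; simpl; ring.
Qed.

Lemma csum_ext a b n : (forall j, (j <= n)%nat -> a j = b j) -> csum a n = csum b n.
Proof. induction n; intros H; simpl. apply H; lia. rewrite IHn by (intros; apply H; lia). rewrite H; auto. Qed.
Lemma csum_plus a b n : csum (fun j => Cplus (a j) (b j)) n = Cplus (csum a n) (csum b n).
Proof. induction n; simpl; auto. rewrite IHn; ring. Qed.
Lemma csum_scal z a n : csum (fun j => Cmult z (a j)) n = Cmult z (csum a n).
Proof. induction n; simpl; auto. rewrite IHn; ring. Qed.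
Lemma csum_shift a n : csum a (S n) = Cplus (a O) (csum (fun j => a (S j)) n).
Proof. induction n. simpl; auto. change (csum a (S (S n))) with (Cplus (csum a (S n)) (a (S (S n)))).
  rewrite IHn. simpl. ring. Qed.
Lemma csum_extend a m m' : (forall j, (m < j)%nat -> a j = RtoC 0) -> (m <= m')%nat -> csum a m' = csum a m.
Proof. intros H Hm; induction Hm; auto. simpl. rewrite IHHm, H by lia. ring. Qed.

Lemma HasDer_csum (a a' : nat -> R -> C) n : (forall j, HasDer (a j) (a' j)) ->
  HasDer (fun t => csum (fun j => a j t) n) (fun t => csum (fun j => a' j t) n).
Proof.
  intro H; induction n.
  - simpl. apply H.
  - simpl. apply (HasDer_plus _ _ _ _ IHn (H (S n))).
Qed.

Lemma HasDer_cderiv f j : smoothRC f -> HasDer (cderiv_n j f) (cderiv_n (S j) f).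
Proof.
  intros Hf t; split; apply Derive_correct; apply (Hf (S j) t).
Qed.

Lemma smooth_conj g : smoothRC g -> smoothRC (fun s => Cconj (g s)).
Proof.
  intros Hg k t; destruct (Hg k t) as [H1 H2]; split.
  - exact H1.
  - destruct k; simpl. exact I.
    change (ex_derive (Derive_n (fun s => - Im (g s)) k) t).
    apply (ex_derive_ext (fun s => - Derive_n (fun s => Im (g s)) k s)).
    intro s. now rewrite Derive_n_opp.
    apply (ex_derive_opp (fun s => Derive_n (fun s => Im (g s)) k s)). exact H2.
Qed.

Lemma Ci2 : Cplus (Cmult Ci Ci) (RtoC 1) = RtoC 0.
Proof. apply injective_projections; simpl; ring. Qed.

Lemma pp_S gamma n : pp gamma (S n) = (snd (pp gamma n),
  fun j => (shift_coef (snd (pp gamma n)) j - gamma_prev gamma n * fst (pp gamma n) j) / gamma n).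
Proof. simpl. destruct (pp gamma n); reflexivity. Qed.

Lemma pp_deg gamma n : (forall j, (n < j)%nat -> snd (pp gamma n) j = 0) /\
                       (forall j, (n <= j)%nat -> fst (pp gamma n) j = 0).
Proof.
  induction n.
  - split; intros j Hj; simpl; auto. destruct j; [lia|auto].
  - destruct IHn as [H1 H2]. rewrite pp_S. split; intros j Hj; simpl.
    + destruct j; [lia|]. simpl. rewrite H1, H2 by lia. unfold Rdiv; ring.
    + apply H1; lia.
Qed.

Definition E (c : nat -> R) (m : nat) (f : R -> C) (t : R) : C :=
  csum (fun j => Cmult (RtoC (c j)) (Cmult (cpow Ci j) (cderiv_n j f t))) m.
Definition E' (c : nat -> R) (m : nat) (f : R -> C) (t : R) : C :=
  csum (fun j => Cmult (RtoC (c j)) (Cmult (cpow Ci j) (cderiv_n (S j) f t))) m.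

Lemma HasDer_E c m f : smoothRC f -> HasDer (E c m f) (E' c m f).
Proof.
  intro Hf. unfold E, E'.
  apply (HasDer_csum (fun j t => Cmult (RtoC (c j)) (Cmult (cpow Ci j) (cderiv_n j f t)))
                     (fun j t => Cmult (RtoC (c j)) (Cmult (cpow Ci j) (cderiv_n (S j) f t)))).
  intro j. apply HasDer_scal, HasDer_scal, HasDer_cderiv, Hf.
Qed.

Lemma E_ext c d m f t : (forall j, c j = d j) -> E c m f t = E d m f t.
Proof. intro H. unfold E. apply csum_ext. intros; now rewrite H. Qed.

Lemma E_shift c m f t : Cmult Ci (E' c m f t) = E (shift_coef c) (S m) f t.
Proof.
  unfold E, E'. rewrite csum_shift. simpl shift_coef.
  rewrite <- csum_scal. 
  replace (Cmult (RtoC 0) (Cmult (cpow Ci 0) (cderiv_n 0 f t))) with (RtoC 0)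
    by (apply injective_projections; simpl; ring).
  rewrite Cplus_0_l. apply csum_ext. intros j _. simpl. ring.
Qed.

Lemma csum_lin a b r n : csum (fun j => Cminus (a j) (Cmult r (b j))) n = Cminus (csum a n) (Cmult r (csum b n)).
Proof. induction n; simpl; auto. rewrite IHn; ring. Qed.

Lemma E_lin x y r m f t : E (fun j => x j - r * y j) m f t = Cminus (E x m f t) (Cmult (RtoC r) (E y m f t)).
Proof.
  unfold E. rewrite <- csum_lin. apply csum_ext; intros. rewrite RtoC_minus, RtoC_mult. ring.
Qed.

Lemma E_scal s c m f t : E (fun j => s * c j) m f t = Cmult (RtoC s) (E c m f t).
Proof. unfold E. rewrite <- csum_scal. apply csum_ext; intros. rewrite RtoC_mult. ring. Qed.

Lemma Kop_E gamma n f t : Kop gamma n f t = Cmult (cpow (Copp Ci) n) (E (p_coef gamma n) n f t).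
Proof. reflexivity. Qed.

Definition KP gamma n f t : C := match n with O => RtoC 0 | S m => Kop gamma m f t end.

Lemma Kop_der gamma f n : (forall k, 0 < gamma k) -> smoothRC f ->
  HasDer (Kop gamma n f) (fun t => Cminus (Cmult (RtoC (gamma n)) (Kop gamma (S n) f t))
                                         (Cmult (RtoC (gamma_prev gamma n)) (KP gamma n f t))).
Proof.
  intros Hpos Hf.
  eapply HasDer_ext. apply (HasDer_scal (cpow (Copp Ci) n)). apply (HasDer_E (p_coef gamma n) n f Hf).
  intro; reflexivity.
  intro t.
  assert (Hid : Cmult (RtoC (gamma n)) (E (p_coef gamma (S n)) (S n) f t) =
     Cminus (Cmult Ci (E' (p_coef gamma n) n f t)) (Cmult (RtoC (gamma_prev gamma n)) (E (fst (pp gamma n)) (S n) f t))).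
  { rewrite <- E_scal, E_shift, <- E_lin. apply E_ext. intro j. unfold p_coef. rewrite pp_S. simpl.
    replace (shift_coef (p_coef gamma n) j) with (shift_coef (snd (pp gamma n)) j) by (destruct j; reflexivity).
change (fun j0 => snd (pp gamma n) j0) with (snd (pp gamma n)). set (u := shift_coef _ _ - _). field. apply Rgt_not_eq, Hpos. }
  rewrite Kop_E. change (cpow (Copp Ci) (S n)) with (Cmult (Copp Ci) (cpow (Copp Ci) n)).
  set (Y := E (p_coef gamma (S n)) (S n) f t) in *.
  replace (Cmult (RtoC (gamma n)) (Cmult (Cmult (Copp Ci) (cpow (Copp Ci) n)) Y))
     with (Cmult (Cmult (Copp Ci) (cpow (Copp Ci) n)) (Cmult (RtoC (gamma n)) Y)) by ring.
  rewrite Hid. destruct n as [|m].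
  - simpl KP. replace (E (fst (pp gamma 0)) 1 f t) with (RtoC 0).
    2:{ apply injective_projections; simpl; ring. }
    set (P := cpow (Copp Ci) 0). set (X := E' (p_coef gamma 0) 0 f t).
    transitivity (Cplus (Cminus (Cmult (Cmult (Copp Ci) P) (Cminus (Cmult Ci X) (Cmult (RtoC (gamma_prev gamma 0)) (RtoC 0))))
        (Cmult (RtoC (gamma_prev gamma 0)) (RtoC 0))) (Cmult (Cplus (Cmult Ci Ci) (RtoC 1)) (Cmult P X))).
    2:{ rewrite Ci2. ring. }
    ring.
  - simpl KP. rewrite Kop_E.
    replace (E (fst (pp gamma (S m))) (S (S m)) f t) with (E (p_coef gamma m) m f t).
    2:{ rewrite pp_S. simpl. unfold E. symmetry. apply csum_extend; [|lia].
        intros j Hj. unfold p_coef; simpl; rewrite (proj1 (pp_deg gamma m)) by lia. apply injective_projections; simpl; ring. }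
    set (Q := E (p_coef gamma m) m f t). set (X := E' (p_coef gamma (S m)) (S m) f t).
    change (cpow (Copp Ci) (S m)) with (Cmult (Copp Ci) (cpow (Copp Ci) m)).
    set (P := cpow (Copp Ci) m). set (g := RtoC (gamma_prev gamma (S m))).
    transitivity (Cplus (Cminus (Cmult (Cmult (Copp Ci) (Cmult (Copp Ci) P)) (Cminus (Cmult Ci X) (Cmult g Q)))
        (Cmult g (Cmult P Q))) (Cmult (Cplus (Cmult Ci Ci) (RtoC 1)) (Cplus (Cmult (Copp Ci) (Cmult P X)) (Cmult g (Cmult P Q))))).
    2:{ rewrite Ci2. ring. }
    ring.
Qed.

Lemma Kop0 gamma F t : Kop gamma 0 F t = F t.
Proof. unfold Kop; simpl. unfold p_coef; simpl. apply injective_projections; simpl; unfold Re, Im; ring. Qed.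

Definition Ssum gamma f h n t := csum (fun k => Cmult (Kop gamma k f t) (Kop gamma k h t)) n.
Definition Aterm gamma f h n t := Cmult (RtoC (gamma n))
  (Cplus (Cmult (Kop gamma (S n) f t) (Kop gamma n h t)) (Cmult (Kop gamma n f t) (Kop gamma (S n) h t))).

Lemma Ssum_der gamma f h n : (forall k, 0 < gamma k) -> smoothRC f -> smoothRC h ->
  HasDer (Ssum gamma f h n) (Aterm gamma f h n).
Proof.
  intros Hp Hf Hh. induction n.
  - eapply HasDer_ext. apply (HasDer_mult _ _ _ _ (Kop_der gamma f 0 Hp Hf) (Kop_der gamma h 0 Hp Hh)).
    intro; reflexivity. intro t. unfold Aterm. simpl KP. ring.
  - eapply HasDer_ext. apply (HasDer_plus _ _ _ _ IHn (HasDer_mult _ _ _ _ (Kop_der gamma f (S n) Hp Hf) (Kop_der gamma h (S n) Hp Hh))).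
    intro; reflexivity. intro t. unfold Aterm. simpl KP. simpl gamma_prev. ring.
Qed.

Lemma conj_step gamma g n : (forall k, 0 < gamma k) -> smoothRC g ->
  (forall t, Kop gamma n (fun s => Cconj (g s)) t = Cconj (Kop gamma n g t)) ->
  (forall t, KP gamma n (fun s => Cconj (g s)) t = Cconj (KP gamma n g t)) ->
  forall t, Kop gamma (S n) (fun s => Cconj (g s)) t = Cconj (Kop gamma (S n) g t).
Proof.
  intros Hp Hg IH1 IH2 t.
  destruct (Kop_der gamma (fun s => Cconj (g s)) n Hp (smooth_conj g Hg) t) as [Rh Ih].
  destruct (Kop_der gamma g n Hp Hg t) as [Rg Ig].
  set (Dh := Cminus (Cmult (RtoC (gamma n)) (Kop gamma (S n) (fun s => Cconj (g s)) t)) (Cmult (RtoC (gamma_prev gamma n)) (KP gamma n (fun s => Cconj (g s)) t))) in *.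
  set (Dg := Cminus (Cmult (RtoC (gamma n)) (Kop gamma (S n) g t)) (Cmult (RtoC (gamma_prev gamma n)) (KP gamma n g t))) in *.
  assert (Rg2 : is_derive (fun s => Re (Kop gamma n (fun s => Cconj (g s)) s)) t (Re Dg)).
  { apply (is_derive_ext (fun s => Re (Kop gamma n g s))); [intro s; now rewrite IH1|exact Rg]. }
  assert (Ig2 : is_derive (fun s => Im (Kop gamma n (fun s => Cconj (g s)) s)) t (- Im Dg)).
  { apply (is_derive_ext (fun s => - Im (Kop gamma n g s))); [intro s; now rewrite IH1|apply D_opp, Ig]. }
  assert (HR : Re Dh = Re Dg) by (rewrite <- (is_derive_unique _ _ _ Rh); apply is_derive_unique; exact Rg2).
  assert (HI : Im Dh = - Im Dg) by (rewrite <- (is_derive_unique _ _ _ Ih); apply is_derive_unique; exact Ig2).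
  unfold Dh, Dg in HR, HI.
  rewrite IH2 in HR, HI.
  assert (0 < gamma n) by apply Hp.
  revert HR HI. generalize (Kop gamma (S n) (fun s => Cconj (g s)) t) (Kop gamma (S n) g t) (KP gamma n g t).
  intros [a b] [c d] [e k]. unfold Re, Im; simpl. intros HR HI.
  apply injective_projections; simpl; apply (Rmult_eq_reg_l (gamma n)); try lra; nra.
Qed.

Lemma conj_all gamma g : (forall k, 0 < gamma k) -> smoothRC g ->
  forall n t, Kop gamma n (fun s => Cconj (g s)) t = Cconj (Kop gamma n g t).
Proof.
  intros Hp Hg.
  assert (H : forall n, (forall t, Kop gamma n (fun s => Cconj (g s)) t = Cconj (Kop gamma n g t)) /\
                        (forall t, Kop gamma (S n) (fun s => Cconj (g s)) t = Cconj (Kop gamma (S n) g t))).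
  { induction n.
    - assert (H0 : forall t, Kop gamma 0 (fun s => Cconj (g s)) t = Cconj (Kop gamma 0 g t))
        by (intro t; now rewrite !Kop0).
      split; auto. apply conj_step; auto. intro t; simpl. apply injective_projections; simpl; ring.
    - destruct IHn as [H1 H2]. split; auto. apply conj_step; auto. }
  intros n; apply H.
Qed.

Lemma ballC_intro (l z : C) (e : R) : Rabs (Re z - Re l) < e -> Rabs (Im z - Im l) < e -> ball l e z.
Proof. intros. unfold ball; simpl. unfold prod_ball. unfold ball; simpl. unfold AbsRing_ball, abs, minus, plus, opp; simpl. split; assumption. Qed.
Lemma ballC_elim (l z : C) (e : R) : ball l e z -> Rabs (Re z - Re l) < e /\ Rabs (Im z - Im l) < e.
Proof. intros H. unfold ball in H; simpl in H. unfold prod_ball in H. unfold ball in H; simpl in H. unfold AbsRing_ball, abs, minus, plus, opp in H; simpl in H. exact H. Qed.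

Lemma im_le_Cmod z : Rabs (Im z) <= Cmod z.
Proof.
  replace (Im z) with (- Re (Cmult z Ci)) by (rewrite re_mult_Ci; ring).
  rewrite Rabs_Ropp. eapply Rle_trans. apply re_le_Cmod. rewrite Cmod_mult, Cmod_Ci. lra.
Qed.

Lemma Cmod_pos z : 0 <= Cmod z.
Proof. apply Cmod_ge_0. Qed.

Lemma bound_gen (g : R) (x0 x1 y0 y1 : C) : 0 < g ->
  Cmod (Cmult (RtoC g) (Cplus (Cmult x1 y0) (Cmult x0 y1))) <=
  (g * (Cmod x0 ^ 2 + Cmod x1 ^ 2) + g * (Cmod y0 ^ 2 + Cmod y1 ^ 2)) / 2.
Proof.
  intro Hg. rewrite Cmod_mult, Cmod_R, Rabs_pos_eq by lra.
  eapply Rle_trans. apply Rmult_le_compat_l. lra. apply Cmod_triangle.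
  rewrite !Cmod_mult.
  assert (H0 := Cmod_pos x0); assert (H1 := Cmod_pos x1); assert (H2 := Cmod_pos y0); assert (H3 := Cmod_pos y1).
  assert (2 * (Cmod x1 * Cmod y0) <= Cmod x1 ^2 + Cmod y0 ^2).
  { assert (Hq := pow2_ge_0 (Cmod x1 - Cmod y0)). replace ((Cmod x1 - Cmod y0)^2) with (Cmod x1 ^2 + Cmod y0 ^2 - 2 * (Cmod x1 * Cmod y0)) in Hq by ring. lra. }
  assert (2 * (Cmod x0 * Cmod y1) <= Cmod x0 ^2 + Cmod y1 ^2).
  { assert (Hq := pow2_ge_0 (Cmod x0 - Cmod y1)). replace ((Cmod x0 - Cmod y1)^2) with (Cmod x0 ^2 + Cmod y1 ^2 - 2 * (Cmod x0 * Cmod y1)) in Hq by ring. lra. }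
  assert (Hs : Cmod x1 * Cmod y0 + Cmod x0 * Cmod y1 <= ((Cmod x0^2+Cmod x1^2) + (Cmod y0^2 + Cmod y1^2))/2) by lra.
  replace ((g * (Cmod x0 ^ 2 + Cmod x1 ^ 2) + g * (Cmod y0 ^ 2 + Cmod y1 ^ 2)) / 2)
    with (g * (((Cmod x0^2+Cmod x1^2) + (Cmod y0^2 + Cmod y1^2))/2)) by field.
  apply Rmult_le_compat_l; lra.
Qed.

Lemma cont_Re F F' t : HasDer F F' -> continuity_pt (fun s => Re (F s)) t.
Proof. intro H. apply derivable_continuous_pt. exists (Re (F' t)). apply is_derive_Reals, (proj1 (H t)). Qed.
Lemma cont_Im F F' t : HasDer F F' -> continuity_pt (fun s => Im (F s)) t.
Proof. intro H. apply derivable_continuous_pt. exists (Im (F' t)). apply is_derive_Reals, (proj2 (H t)). Qed.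

Lemma cp_mult f g x : continuity_pt f x -> continuity_pt g x -> continuity_pt (fun s => f s * g s) x.
Proof. intros; exact (continuity_pt_mult f g x H H0). Qed.
Lemma cp_plus f g x : continuity_pt f x -> continuity_pt g x -> continuity_pt (fun s => f s + g s) x.
Proof. intros; exact (continuity_pt_plus f g x H H0). Qed.
Lemma cp_const c x : continuity_pt (fun _ => c) x.
Proof. apply continuity_pt_const. intros a b; reflexivity. Qed.

Definition uu gamma F n t := gamma n * ((Cmod (Kop gamma n F t)) ^ 2 + (Cmod (Kop gamma (S n) F t)) ^ 2).

Lemma uu_cont gamma F n t : (forall k, 0 < gamma k) -> smoothRC F -> continuity_pt (uu gamma F n) t.
Proof.
  intros Hp HF.
  assert (D0 := Kop_der gamma F n Hp HF). assert (D1 := Kop_der gamma F (S n) Hp HF).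
  apply (continuity_pt_ext (fun s => gamma n * ((Re (Kop gamma n F s) * Re (Kop gamma n F s) + Im (Kop gamma n F s) * Im (Kop gamma n F s))
     + (Re (Kop gamma (S n) F s) * Re (Kop gamma (S n) F s) + Im (Kop gamma (S n) F s) * Im (Kop gamma (S n) F s))))).
  { intro s. unfold uu. rewrite !Cmod2_alt. ring. }
  apply cp_mult. apply cp_const.
  repeat apply cp_plus; apply cp_mult; first [eapply cont_Re; eassumption | eapply cont_Im; eassumption].
Qed.

Lemma uu_nonneg gamma F n t : (forall k, 0 < gamma k) -> 0 <= uu gamma F n t.
Proof. intro Hp. unfold uu. apply Rmult_le_pos. left; apply Hp. apply Rplus_le_le_0_compat; apply pow2_ge_0. Qed.

Lemma Cdiv_R z r : r <> 0 -> Re (Cdiv z (RtoC r)) = Re z / r /\ Im (Cdiv z (RtoC r)) = Im z / r.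
Proof. intro H. unfold Cdiv, Cinv, Cmult, Re, Im; simpl. split; field; auto. Qed.

Lemma final_real (x x0 l e B d H : R) : 0 < e -> 0 < B -> 0 <= d -> 2*B*(d+1)/e < H ->
  Rabs (x - x0) <= B * d -> Rabs (x0/H - l) < e/2 -> Rabs (x/H - l) < e.
Proof.
  intros He HB Hd HH Hx Hx0.
  assert (Hp : 0 < 2*B*(d+1)/e) by (apply Rdiv_lt_0_compat; nra).
  assert (H0 : 0 < H) by lra.
  assert (H1 : 2*B*(d+1) < e * H).
  { apply (Rmult_lt_compat_l e) in HH; auto. replace (e * (2*B*(d+1)/e)) with (2*B*(d+1)) in HH by (field; lra). lra. }
  assert (H2 : Rabs (x/H - x0/H) < e/2).
  { replace (x/H - x0/H) with ((x - x0) * / H) by (field; lra).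
    rewrite Rabs_mult, (Rabs_pos_eq (/H)) by (left; apply Rinv_0_lt_compat; lra).
    apply (Rmult_lt_reg_r H); auto. rewrite Rmult_assoc, Rinv_l, Rmult_1_r by lra. nra. }
  replace (x/H - l) with ((x/H - x0/H) + (x0/H - l)) by ring.
  eapply Rle_lt_trans. apply Rabs_triang. lra.
Qed.

Theorem lemma31 (gamma : nat -> R) (f g : R -> C)
  (Hpos : forall n : nat, 0 < gamma n)
  (HC1 : CondC1 gamma) (HC2 : CondC2 gamma) (HC3 : CondC3 gamma) (HC4 : CondC4 gamma)
  (HC5 : CondC5 gamma) (HC6 : CondC6 gamma) (HC7 : CondC7 gamma)
  (Hf : in_L gamma f) (Hg : in_L gamma g) :
  (exists (t0 : R) (l : C),
      filterlim (fun n => sigma_fg gamma f g n t0) eventually (locally l)) ->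
  exists c : C, forall t : R,
      filterlim (fun n => sigma_fg gamma f g n t) eventually (locally c).
Proof.
  intros [t0 [l Hl]]. exists l. intro t.
  destruct Hf as [Sf Uf]. destruct Hg as [Sg Ug].
  set (h := fun s => Cconj (g s)).
  assert (Sh : smoothRC h) by (apply smooth_conj; auto).
  assert (Huh : forall n s, uu gamma h n s = uu gamma g n s).
  { intros n s. unfold uu, h. rewrite !(conj_all gamma g Hpos Sg), !Cmod_conj. reflexivity. }
  assert (Hab : Rmin t0 t <= Rmax t0 t) by apply Rmin_Rmax.
  destruct (Uf _ _ Hab) as [Lf HLf]. destruct (HLf 1 Rlt_0_1) as [Nf HNf].
  destruct (Ug _ _ Hab) as [Lg HLg]. destruct (HLg 1 Rlt_0_1) as [Ng HNg].
  set (N := max Nf Ng).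
  assert (Bf : forall n s, (N <= n)%nat -> Rmin t0 t <= s <= Rmax t0 t -> uu gamma f n s <= uu gamma f N s + 2).
  { intros n s Hn Hs. assert (H1 := HNf n ltac:(lia) s Hs). assert (H2 := HNf N ltac:(lia) s Hs).
    cbv beta in H1, H2. apply Rabs_def2 in H1. apply Rabs_def2 in H2. unfold uu. lra. }
  assert (Bg : forall n s, (N <= n)%nat -> Rmin t0 t <= s <= Rmax t0 t -> uu gamma g n s <= uu gamma g N s + 2).
  { intros n s Hn Hs. assert (H1 := HNg n ltac:(lia) s Hs). assert (H2 := HNg N ltac:(lia) s Hs).
    cbv beta in H1, H2. apply Rabs_def2 in H1. apply Rabs_def2 in H2. unfold uu. lra. }
  destruct (continuity_ab_maj (uu gamma f N) _ _ Hab (fun c _ => uu_cont gamma f N c Hpos Sf)) as [Mf [HMf _]].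
  destruct (continuity_ab_maj (uu gamma g N) _ _ Hab (fun c _ => uu_cont gamma g N c Hpos Sg)) as [Mg [HMg _]].
  set (B := uu gamma f N Mf + uu gamma g N Mg + 4).
  assert (HB : 0 < B) by (assert (H1 := uu_nonneg gamma f N Mf Hpos); assert (H2 := uu_nonneg gamma g N Mg Hpos); unfold B; lra).
  assert (HA : forall n s, (N <= n)%nat -> Rmin t0 t <= s <= Rmax t0 t ->
      Rabs (Re (Aterm gamma f h n s)) <= B /\ Rabs (Im (Aterm gamma f h n s)) <= B).
  { intros n s Hn Hs.
    assert (Hb : Cmod (Aterm gamma f h n s) <= (uu gamma f n s + uu gamma h n s) / 2)
      by exact (bound_gen (gamma n) (Kop gamma n f s) (Kop gamma (S n) f s) (Kop gamma n h s) (Kop gamma (S n) h s) (Hpos n)).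
    rewrite Huh in Hb.
    assert (H1 := Bf n s Hn Hs). assert (H2 := Bg n s Hn Hs). assert (H3 := HMf s Hs). assert (H4 := HMg s Hs).
    assert (H5 := uu_nonneg gamma f N Mf Hpos); assert (H6 := uu_nonneg gamma g N Mg Hpos).
    split; [eapply Rle_trans; [apply re_le_Cmod|] | eapply Rle_trans; [apply im_le_Cmod|]]; unfold B; lra. }
  assert (HD : forall n, (N <= n)%nat ->
     Rabs (Re (Ssum gamma f h n t) - Re (Ssum gamma f h n t0)) <= B * Rabs (t - t0) /\
     Rabs (Im (Ssum gamma f h n t) - Im (Ssum gamma f h n t0)) <= B * Rabs (t - t0)).
  { intros n Hn. assert (Hd := Ssum_der gamma f h n Hpos Sf Sh). split.
    - destruct (MVT_abs (fun s => Re (Ssum gamma f h n s)) (fun s => Re (Aterm gamma f h n s)) t0 t) as [c [Hc1 Hc2]].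
      { intros c _. apply is_derive_Reals, (proj1 (Hd c)). }
      rewrite Hc1. apply Rmult_le_compat_r. apply Rabs_pos. apply (HA n c Hn Hc2).
    - destruct (MVT_abs (fun s => Im (Ssum gamma f h n s)) (fun s => Im (Aterm gamma f h n s)) t0 t) as [c [Hc1 Hc2]].
      { intros c _. apply is_derive_Reals, (proj2 (Hd c)). }
      rewrite Hc1. apply Rmult_le_compat_r. apply Rabs_pos. apply (HA n c Hn Hc2). }
  apply filterlim_locally. intro eps.
  destruct (proj1 (filterlim_locally _ l) Hl (pos_div_2 eps)) as [N1 HN1].
  unfold CondC4 in HC4. apply is_lim_seq_spec in HC4.
  destruct (HC4 (2 * B * (Rabs (t - t0) + 1) / eps)) as [N3 HN3].
  exists (max N (max N1 N3)). intros n Hn.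
  assert (HH := HN3 n ltac:(lia)).
  assert (Es : forall s, sigma_fg gamma f g n s = Cdiv (Ssum gamma f h n s) (RtoC (sum_f_R0 (fun k => / gamma k) n))) by reflexivity.
  assert (Hne : sum_f_R0 (fun k => / gamma k) n <> 0).
  { apply Rgt_not_eq. eapply Rlt_trans; [|exact HH]. apply Rdiv_lt_0_compat. 2: apply cond_pos.
    assert (0 <= Rabs (t - t0)) by apply Rabs_pos. nra. }
  destruct (ballC_elim _ _ _ (HN1 n ltac:(lia))) as [E1 E2].
  rewrite Es in E1, E2 |- *.
  destruct (Cdiv_R (Ssum gamma f h n t0) _ Hne) as [R0 I0].
  destruct (Cdiv_R (Ssum gamma f h n t) _ Hne) as [R1 I1].
  rewrite R0 in E1. rewrite I0 in E2.
  destruct (HD n ltac:(lia)) as [D1 D2].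
  apply ballC_intro; [rewrite R1 | rewrite I1]; eapply final_real; eauto; try apply cond_pos; try apply Rabs_pos.
Qed.
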